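(* Let $M$ be a real symmetric $n\times n$ matrix with $\mathrm{Trace}(M)\ge 0$, and write $\det(xI-M)=\sum_{k=0}^n a_kx^k$. Suppose $M$ has exactly one positive eigenvalue, $r-1$ negative eigenvalues and $n-r$ zero eigenvalues (counted with multiplicity), where $2\le r\le n$. If $\mathrm{Trace}(M)=0$, then $a_k<0$ for $n-r\le k\le n-2$; if $\mathrm{Trace}(M)>0$, then $a_k<0$ for $n-r\le k\le n-1$. *)

(* Defs.v *)
From HB Require Import structures.
From mathcomp Require Import all_boot all_order all_algebra.
From mathcomp Require Import reals.
Set Implicit Arguments.
Unset Strict Implicit.
Unset Printing Implicit Defensive.

(* Main.v *)
Require Import Defs.
From HB Require Import structures.
From mathcomp Require Import all_boot all_order all_algebra.
From mathcomp Require Import reals.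
From mathcomp Require Import ring lra zify.
Import Order.TTheory GRing.Theory Num.Theory.
Local Open Scope ring_scope.

Lemma coef_XaddCM (R : nzRingType) (c : R) (g : {poly R}) m :
  (('X + c%:P) * g)`_m = (if m is m'.+1 then g`_m' else 0) + c * g`_m.
Proof. by rewrite mulrDl coefD coefXM coefCM; case: m. Qed.

Lemma prod_const_cnt (R : nzRingType) (T : Type) (s : seq T) (P : pred T) (c : R) :
  \prod_(x <- s | P x) c = c ^+ count P s.
Proof.
elim: s => [|a s IH]; first by rewrite big_nil.
by rewrite big_cons IH /=; case: (P a); rewrite ?exprS ?add0n.
Qed.

Lemma core (R : realFieldType) (l : seq R) :
  (forall v, v \in l -> 0 < v) ->
  let q := \prod_(v <- l) ('X + v%:P) in
  let e := \sum_(v <- l) v in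
  let f := ('X - e%:P) * q in
  (forall m, (m <= size l)%N -> 0 < q`_m) /\ q`_(size l) = 1 /\
  (forall m, (size l < m)%N -> q`_m = 0) /\
  (forall m, (m < size l)%N -> f`_m < 0) /\ f`_(size l) = 0.
Proof.
elim: l => [|v l IH] Hpos /=.
  rewrite !big_nil subr0 mulr1.
  split; first by case=> // _; rewrite coef1 ltr01.
  split; first by rewrite coef1.
  split; first by case=> // m _; rewrite coef1.
  split; first by [].
  by rewrite coefX.
have [Hq [Hqd [Hq0 [Hf Hfd]]]] := IH (fun w Hw => Hpos w (mem_behead (s:=v::l) Hw)).
have Hv : 0 < v by apply: Hpos; rewrite inE eqxx.
set q' := \prod_(w <- l) ('X + w%:P) in Hq Hqd Hq0 Hf Hfd *.
set e' := \sum_(w <- l) w in Hf Hfd *.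
rewrite !big_cons.
set d := size l.
have Hqge : forall m, 0 <= q'`_m.
  move=> m; case: (leqP m d) => Hm; first exact/ltW/Hq.
  by rewrite Hq0.
have Hfle : forall m, (m <= d)%N -> (('X - e'%:P) * q')`_m <= 0.
  move=> m Hm; case: (ltnP m d) => Hm'; first exact/ltW/Hf.
  have -> : m = d by apply/eqP; rewrite eqn_leq Hm.
  by rewrite Hfd.
have Hfd1 : (('X - e'%:P) * q')`_d.+1 = 1.
  by rewrite -polyCN coef_XaddCM Hqd Hq0 // mulr0 addr0.
have Hqn : forall m, (m <= d.+1)%N -> 0 < (('X + v%:P) * q')`_m.
  move=> [|m] Hm; rewrite coef_XaddCM.
    by rewrite add0r; apply: mulr_gt0 => //; apply: Hq.
  apply: ltr_pwDl; first by apply: Hq.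
  by apply: mulr_ge0; [exact: ltW|exact: Hqge].
have Hid : ('X - (v + e')%:P) * (('X + v%:P) * q') =
    ('X + v%:P) * (('X - e'%:P) * q') - v%:P * (('X + v%:P) * q').
  rewrite polyCD; ring.
split; first exact: Hqn.
split; first by rewrite coef_XaddCM Hqd Hq0 // mulr0 addr0.
split.
  move=> [|m] Hm //; rewrite coef_XaddCM Hq0 ?Hq0 ?mulr0 ?addr0 //.
  by apply: ltn_trans Hm.
rewrite Hid.
split.
  move=> m Hm; rewrite coefB coefCM.
  have H1 : (('X + v%:P) * (('X - e'%:P) * q'))`_m <= 0.
    rewrite coef_XaddCM; case: m Hm => [|m] Hm.
      by rewrite add0r; apply: mulr_ge0_le0; [exact: ltW|apply: Hfle].
    rewrite -[X in _ <= X](addr0 0); apply: lerD; first by apply: Hfle; apply: ltnW.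
    by apply: mulr_ge0_le0; [exact: ltW|apply: Hfle].
  have H2 : 0 < v * (('X + v%:P) * q')`_m.
    by apply: mulr_gt0 => //; apply: Hqn; apply: ltnW.
  lra.
rewrite coefB coefCM coef_XaddCM Hfd Hfd1 coef_XaddCM Hqd Hq0 //.
rewrite mulr0 addr0 mulr1. by rewrite add0r subrr.
Qed.

Theorem theorem2p2 (R : realType) (n r : nat) (M : 'M[R]_n) (s : seq R) :
  M^T = M ->
  0 <= \tr M ->
  (2 <= r <= n)%N ->
  char_poly M = \prod_(x <- s) ('X - x%:P) ->
  count (fun x => 0 < x) s = 1%N ->
  count (fun x => x < 0) s = (r - 1)%N ->
  count (fun x => x == 0) s = (n - r)%N ->
  (\tr M = 0 -> forall k : nat, (n - r <= k <= n - 2)%N -> (char_poly M)`_k < 0) /\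
  (0 < \tr M -> forall k : nat, (n - r <= k <= n - 1)%N -> (char_poly M)`_k < 0).
Proof.
move=> _ Htr /andP[H2r Hrn] Hchar Hpos Hneg Hzero.
have [lam Hlam] : exists lam, [seq x <- s | 0 < x] = [:: lam].
  move: (size_filter (fun x => 0 < x) s); rewrite Hpos.
  by case: [seq x <- s | 0 < x] => [|a [|b t]] //= _; exists a.
set l := map -%R [seq x <- s | x < 0].
have Hl : forall v, v \in l -> 0 < v.
  move=> v /mapP[x]; rewrite mem_filter => /andP[Hx _] ->.
  by rewrite oppr_gt0.
have Hsz : size l = (r-1)%N by rewrite size_map size_filter.
have Hdec : char_poly M = 'X^(n-r) * (('X - lam%:P) * \prod_(v <- l) ('X + v%:P)).
  rewrite Hchar (bigID (fun x : R => x == 0)) /=.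
  rewrite [X in _ * X](bigID (fun x : R => 0 < x)) /=.
  congr (_ * _).
    rewrite (eq_bigr (fun=> 'X)); last by move=> x /eqP ->; rewrite subr0.
    by rewrite prod_const_cnt Hzero.
  congr (_ * _).
    rewrite (eq_bigl (fun x => 0 < x)); last by move=> x; case: ltrgt0P.
    by rewrite -big_filter Hlam big_seq1.
  rewrite big_map big_filter; apply: eq_big => x.
    by case: ltrgt0P.
  by move=> _; rewrite polyCN.
have [Hq [Hqd [Hq0 [Hf Hfd]]]] := @core R l Hl.
set q := \prod_(v <- l) ('X + v%:P) in Hdec Hq Hqd Hq0 Hf Hfd.
set e := \sum_(v <- l) v in Hf Hfd.
set t := lam - e.
have Hg : ('X - lam%:P) * q = ('X - e%:P) * q - t%:P * q.
  by rewrite /t polyCB; ring.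
have Hcoef : forall k, (n - r <= k)%N ->
    (char_poly M)`_k = (('X - e%:P) * q)`_(k - (n-r)) - t * q`_(k - (n-r)).
  by move=> k Hk; rewrite Hdec coefXnM ltnNge Hk /= Hg coefB coefCM.
have Ht : t = \tr M.
  have n0 : (0 < n)%N by lia.
  have := char_poly_trace M n0.
  rewrite Hcoef; last by lia.
  have -> : (n.-1 - (n-r) = size l)%N by rewrite Hsz; lia.
  rewrite Hfd Hqd => H; lra.
have t0 : 0 <= t by rewrite Ht.
split.
  move=> Htr0 k /andP[Hk1 Hk2]; rewrite Hcoef //.
  have Hm : (k - (n-r) < size l)%N by rewrite Hsz; lia.
  have := Hf _ Hm.
  have : 0 <= t * q`_(k - (n - r)) by apply: mulr_ge0 => //; apply/ltW/Hq/ltnW.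
  lra.
move=> Htr1 k /andP[Hk1 Hk2]; rewrite Hcoef //.
have [Hm|Hm] := ltnP (k - (n-r)) (size l).
  have := Hf _ Hm.
  have : 0 <= t * q`_(k - (n - r)) by apply: mulr_ge0 => //; apply/ltW/Hq/ltnW.
  lra.
have -> : (k - (n-r) = size l)%N by rewrite Hsz in Hm *; lia.
rewrite Hfd Hqd; lra.
Qed.
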